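(* Let $q\in K_+$ and let $m$ be an irreducible Metzler $n\times n$ matrix. Define $l(x)=\dfrac{\langle q,mx\rangle}{\langle q,x\rangle}$ for $x\in K_+$. Then $l$ is Lipschitz continuous from $(K_+,d)$ to $(\mathbb R,|\cdot|)$, where $d$ is Hilbert's projective metric, with Lipschitz constant satisfying \[ \mathrm{Lip}\,l\le \sup_{x\in K_0}\inf_{a\in\mathbb R}\frac{\langle q,|m-a\,\mathrm{id}|\,x\rangle}{\langle q,x\rangle}. \]
   Context: A matrix is Metzler if its off-diagonal entries are nonnegative; it is irreducible if for every partition $\{1,\dots,n\}=I\sqcup J$ into nonempty sets some $m_{ij}$ with $i\in I$, $j\in J$ is positive. $K$ is the nonnegative orthant, $K_+$ the positive orthant, $K_0=K\setminus\{0\}$. Hilbert's projective metric on $K_+$ is $d(x,y)=\log\max_{1\le i,j\le n}\frac{x_iy_j}{x_jy_i}$. For a matrix $m=(m_{ij})$, $|m|=(|m_{ij}|)$ denotes the entrywise absolute value. *)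

(* Defs.v *)
From HB Require Import structures.
From mathcomp Require Import all_boot all_order all_algebra.
From mathcomp Require Import all_classical all_reals all_analysis.
Set Implicit Arguments. Unset Strict Implicit. Unset Printing Implicit Defensive.
Import Order.TTheory GRing.Theory Num.Theory.
Local Open Scope ring_scope.

Section Defs.
Variables (R : realType) (n : nat).

Definition inner (u v : 'cV[R]_n) : R := \sum_(i < n) u i 0 * v i 0.

Definition posorth (x : 'cV[R]_n) : Prop := forall i, 0 < x i 0.
Definition nonnegorth (x : 'cV[R]_n) : Prop := forall i, 0 <= x i 0.
Definition K0 (x : 'cV[R]_n) : Prop := nonnegorth x /\ x <> 0.

Definition metzler (m : 'M[R]_n) : Prop :=
  forall i j : 'I_n, i != j -> 0 <= m i j.

Definition irreducible_mx (m : 'M[R]_n) : Prop :=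
  forall I : {set 'I_n}, I != finset.set0 -> ~: I != finset.set0 ->
    exists i j, [/\ i \in I, j \in ~: I & 0 < m i j].

(* Hilbert's projective metric:  log max_{i,j} x_i y_j / (x_j y_i)
   (the max is taken with neutral element 1, which is attained at i = j
   whenever n >= 1) *)
Definition hilbert_d (x y : 'cV[R]_n) : R :=
  ln (\big[Num.max/1]_(i < n) \big[Num.max/1]_(j < n)
        ((x i 0 * y j 0) / (x j 0 * y i 0))).

Definition absmx (m : 'M[R]_n) : 'M[R]_n := \matrix_(i, j) `|m i j|.

Definition rayleigh (q : 'cV[R]_n) (m : 'M[R]_n) (x : 'cV[R]_n) : R :=
  inner q (m *m x) / inner q x.

Definition lip_bound (q : 'cV[R]_n) (m : 'M[R]_n) : \bar R :=
  ereal_sup [set ereal_inf [set ((inner q (absmx (m - a%:M) *m x) / inner q x)%:E)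
                             | a in [set: R]]
            | x in K0].

Definition lip_const (f : 'cV[R]_n -> R) : \bar R :=
  ereal_sup [set r : \bar R | exists x y : 'cV[R]_n,
      [/\ posorth x, posorth y, hilbert_d x y != 0 &
           r = (`|f x - f y| / hilbert_d x y)%:E]].

End Defs.

(* Main.v *)
Require Import Defs.
From HB Require Import structures.
From mathcomp Require Import all_boot all_order all_algebra.
From mathcomp Require Import all_classical all_reals all_analysis.
From mathcomp Require Import ring lra.
Import Order.TTheory GRing.Theory Num.Theory.
Local Open Scope ring_scope.
Set Implicit Arguments. Unset Strict Implicit.

Section Aux.
Variables (R : realType) (n : nat).
Implicit Types (q u v x y : 'cV[R]_n) (B : 'M[R]_n).

Lemma inner_mul q B u :
  inner q (B *m u) = \sum_i \sum_j q i 0 * B i j * u j 0.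
Proof.
rewrite /inner; apply: eq_bigr => i _; rewrite mxE big_distrr /=.
by apply: eq_bigr => j _; rewrite mulrA.
Qed.

Lemma inner_pos q u : (0 < n)%N -> posorth q -> posorth u -> 0 < inner q u.
Proof.
move=> n0 hq hu; rewrite /inner.
case: n q u hq hu n0 => [|n'] q u hq hu n0 //.
rewrite big_ord_recl; apply: ltr_pwDl; first exact: mulr_gt0.
by apply: sumr_ge0 => i _; apply: mulr_ge0; apply: ltW.
Qed.

Lemma step q u v B rho : (0 < n)%N -> posorth q -> posorth u -> posorth v -> 0 < rho ->
  (forall j k, v j 0 * u k 0 <= rho * (v k 0 * u j 0)) ->
  `|inner q (B *m u) / inner q u - inner q (B *m v) / inner q v|
    <= (rho - 1) * (inner q (absmx B *m u) / inner q u).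
Proof.
move=> n0 hq hu hv rho0 H.
have Su := inner_pos n0 hq hu; have Sv := inner_pos n0 hq hv.
set su := inner q u; set sv := inner q v.
have eN : inner q (B *m u) / su - inner q (B *m v) / sv =
   (\sum_i \sum_j q i 0 * B i j * (u j 0 * sv - v j 0 * su)) / (su * sv).
  rewrite !inner_mul.
  have -> : \sum_i \sum_j q i 0 * B i j * (u j 0 * sv - v j 0 * su) =
     (\sum_i \sum_j q i 0 * B i j * u j 0) * sv - (\sum_i \sum_j q i 0 * B i j * v j 0) * su.
    rewrite !big_distrl -sumrB; apply: eq_bigr => i _.
    rewrite !big_distrl -sumrB; apply: eq_bigr => j _ /=; ring.
  field; apply/andP; split; apply: lt0r_neq0 => //.
have key : forall j, `|u j 0 * sv - v j 0 * su| <= (rho - 1) * u j 0 * sv.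
  move=> j.
  have -> : u j 0 * sv - v j 0 * su = \sum_k q k 0 * (u j 0 * v k 0 - v j 0 * u k 0).
    rewrite /sv /su /inner big_distrr big_distrr -sumrB /=.
    by apply: eq_bigr => k _; ring.
  rewrite /sv /inner !big_distrr /=.
  apply: le_trans (ler_norm_sum _ _ _) _; apply: ler_sum => k _.
  rewrite normrM (gtr0_norm (hq k)).
  have -> : (rho - 1) * u j 0 * (q k 0 * v k 0) = q k 0 * ((rho - 1) * (u j 0 * v k 0)) by ring.
  rewrite ler_pM2l //.
  have h1 := H j k; have h2 := H k j.
  have a := hu j; have b := hu k; have c := hv j; have d := hv k.
  rewrite ler_norml; apply/andP; split.
    nra.
  have hp : 0 <= u j 0 * v k 0 by nra.
  have hq2 : 0 <= v j 0 * u k 0 by nra.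
  nra.
rewrite eN normrM normfV (gtr0_norm (mulr_gt0 Su Sv)).
rewrite ler_pdivrMr ?mulr_gt0 //.
apply: le_trans (ler_norm_sum _ _ _) _.
have -> : (rho - 1) * (inner q (absmx B *m u) / su) * (su * sv) =
   \sum_i \sum_j q i 0 * `|B i j| * ((rho - 1) * u j 0 * sv).
  rewrite inner_mul; set S := \sum_i _.
  have -> : \sum_i \sum_j q i 0 * `|B i j| * ((rho - 1) * u j 0 * sv) = (rho - 1) * sv * S.
    rewrite /S big_distrr; apply: eq_bigr => i _ /=; rewrite big_distrr; apply: eq_bigr => j _ /=.
    rewrite mxE; ring.
  field; apply: lt0r_neq0 => //.
apply: ler_sum => i _; apply: le_trans (ler_norm_sum _ _ _) _; apply: ler_sum => j _.
rewrite normrM normrM (gtr0_norm (hq i)); apply: ler_wpM2l.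
  by apply: mulr_ge0; [apply: ltW|].
exact: key.
Qed.


Lemma shift q m u a : (0 < n)%N -> posorth q -> posorth u ->
  rayleigh q m u - a = inner q ((m - a%:M) *m u) / inner q u.
Proof.
move=> n0 hq hu; have Su := inner_pos n0 hq hu.
rewrite /rayleigh mulmxBl mul_scalar_mx.
have -> : inner q (m *m u - a *: u) = inner q (m *m u) - a * inner q u.
  rewrite /inner big_distrr -sumrB; apply: eq_bigr => i _ /=; rewrite !mxE; ring.
field; exact: lt0r_neq0.
Qed.

Lemma core q m x y d L : (0 < n)%N -> posorth q -> posorth x -> posorth y -> 0 <= d ->
  (forall i j, ln (y j 0 / x j 0) - ln (y i 0 / x i 0) <= d) ->
  (forall u, posorth u -> forall e, 0 < e -> exists a,
      inner q (absmx (m - a%:M) *m u) / inner q u <= L + e) ->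
  `|rayleigh q m x - rayleigh q m y| <= L * d.
Proof.
move=> n0 hq hx hy d0 hd hL.
set A := `|rayleigh q m x - rayleigh q m y|.
pose c i := ln (y i 0 / x i 0).
have Le : forall e, 0 < e -> 0 <= L + e.
  move=> e e0; have [a ha] := hL x hx e e0; apply: le_trans ha.
  apply: divr_ge0; last exact: ltW (inner_pos n0 hq hx).
  rewrite /inner; apply: sumr_ge0 => i _; apply: mulr_ge0; first exact: ltW.
  rewrite mxE; apply: sumr_ge0 => j _; rewrite mxE; apply: mulr_ge0 => //; exact: ltW.
have HN : forall N : nat, (0 < N)%N -> forall e, 0 < e ->
    A <= N%:R * ((expR (d / N%:R) - 1) * (L + e)).
  move=> N N0 e e0.
  have Npos : 0 < N%:R :> R by rewrite ltr0n.
  pose z (k : nat) : 'cV[R]_n := \col_i (x i 0 * expR (k%:R * c i / N%:R)).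
  have zpos : forall k, posorth (z k).
    by move=> k i; rewrite mxE; apply: mulr_gt0 => //; apply: expR_gt0.
  have z0 : z 0%N = x.
    by apply/matrixP => i j; rewrite mxE (ord1 j) mul0r mul0r expR0 mulr1.
  have zN : z N = y.
    apply/matrixP => i j; rewrite mxE (ord1 j) mulrAC divff ?lt0r_neq0 // mul1r.
    rewrite /c lnK; last by rewrite posrE; apply: divr_gt0.
    by field; apply: lt0r_neq0.
  set rho := expR (d / N%:R).
  have rho1 : 0 <= rho - 1.
    rewrite subr_ge0; apply: le_trans (expR_ge1Dx _); rewrite lerDl.
    by apply: divr_ge0 => //; apply: ltW.
  have stepk : forall k, `|rayleigh q m (z k) - rayleigh q m (z k.+1)| <= (rho - 1) * (L + e).
    move=> k; have [a ha] := hL (z k) (zpos k) e e0.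
    have -> : rayleigh q m (z k) - rayleigh q m (z k.+1) =
       (rayleigh q m (z k) - a) - (rayleigh q m (z k.+1) - a) by ring.
    rewrite (@shift q m (z k) a n0 hq (zpos k)) (@shift q m (z k.+1) a n0 hq (zpos k.+1)).
    apply: le_trans (@step q (z k) (z k.+1) (m - a%:M) rho n0 hq (zpos k) (zpos k.+1) (expR_gt0 _) _) _.
      move=> j l; rewrite !mxE.
      have eS : forall i, expR (k.+1%:R * c i / N%:R) = expR (k%:R * c i / N%:R) * expR (c i / N%:R).
        by move=> i; rewrite -expRD -[k.+1]addn1 natrD; congr expR; field; apply: lt0r_neq0.
      rewrite !eS.
      set P := x j 0 * expR (k%:R * c j / N%:R) * (x l 0 * expR (k%:R * c l / N%:R)).
      have P0 : 0 < P by rewrite /P; apply: mulr_gt0; apply: mulr_gt0 => //; apply: expR_gt0.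
      have -> : x j 0 * (expR (k%:R * c j / N%:R) * expR (c j / N%:R)) *
                 (x l 0 * expR (k%:R * c l / N%:R)) = P * expR (c j / N%:R) by rewrite /P; ring.
      have -> : rho * (x l 0 * (expR (k%:R * c l / N%:R) * expR (c l / N%:R)) *
                 (x j 0 * expR (k%:R * c j / N%:R))) = P * (rho * expR (c l / N%:R)) by rewrite /P; ring.
      rewrite ler_pM2l // /rho -expRD ler_expR -mulrDl ler_pM2r ?invr_gt0 //.
      by have := hd l j; rewrite /c; lra.
    by rewrite ler_wpM2l.
  have tele : forall K, `|rayleigh q m (z 0%N) - rayleigh q m (z K)| <= K%:R * ((rho - 1) * (L + e)).
    elim => [|K IH]; first by rewrite subrr normr0 mul0r.
    have -> : rayleigh q m (z 0%N) - rayleigh q m (z K.+1) =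
      (rayleigh q m (z 0%N) - rayleigh q m (z K)) + (rayleigh q m (z K) - rayleigh q m (z K.+1)) by ring.
    apply: le_trans (ler_normD _ _) _.
    rewrite -[K.+1]addn1 natrD mulrDl mul1r; apply: lerD => //.
    by rewrite addn1.
  by have := tele N; rewrite z0 zN.
have A0 : 0 <= A by apply: normr_ge0.
have H2 : forall N : nat, (0 < N)%N -> d < N%:R -> A * (N%:R - d) <= N%:R * d * L.
  move=> N N0 dN; apply/ler_addgt0Pr => e' e'0.
  have Npos : 0 < N%:R :> R by rewrite ltr0n.
  have d1 : 0 < d + 1 by lra.
  pose e := e' / (N%:R * (d + 1)).
  have e0 : 0 < e by apply: divr_gt0 => //; apply: mulr_gt0.
  have := HN N N0 e e0; set rho := expR (d / N%:R) => HA.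
  have r1 : rho * (N%:R - d) <= N%:R.
    have h1 : 1 - d / N%:R <= expR (- (d / N%:R)) by have := expR_ge1Dx (- (d / N%:R)); lra.
    have h2 : rho * expR (- (d / N%:R)) = 1 by rewrite /rho -expRD subrr expR0.
    have h3 : rho * (1 - d / N%:R) <= 1.
      rewrite -[X in _ <= X]h2; apply: ler_wpM2l => //; apply: ltW; exact: expR_gt0.
    have -> : N%:R - d = N%:R * (1 - d / N%:R) by field; apply: lt0r_neq0.
    rewrite mulrA (mulrC rho) -mulrA; apply: (@le_trans _ _ (N%:R * 1)); last by rewrite mulr1.
    by apply: ler_wpM2l => //; apply: ltW.
  have Le0 := Le e e0.
  have Nd : 0 <= N%:R - d by lra.
  have s1 : A * (N%:R - d) <= N%:R * ((rho - 1) * (L + e)) * (N%:R - d) by apply: ler_wpM2r.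
  have s2 : (rho - 1) * (N%:R - d) <= d by lra.
  have s3 : N%:R * ((rho - 1) * (L + e)) * (N%:R - d) <= N%:R * d * (L + e).
    have -> : N%:R * ((rho - 1) * (L + e)) * (N%:R - d) = N%:R * (L + e) * ((rho - 1) * (N%:R - d)) by ring.
    have -> : N%:R * d * (L + e) = N%:R * (L + e) * d by ring.
    apply: ler_wpM2l => //; apply: mulr_ge0 => //; apply: ltW.
  have s4 : N%:R * d * e <= e'.
    rewrite /e; have -> : N%:R * d * (e' / (N%:R * (d + 1))) = e' * (d / (d + 1)).
      by field; apply/andP; split; apply: lt0r_neq0.
    rewrite -[leRHS]mulr1; apply: ler_wpM2l; first exact: ltW.
    by rewrite ler_pdivrMr // mul1r; lra.
  have : N%:R * d * (L + e) = N%:R * d * L + N%:R * d * e by ring.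
  lra.
have [//|lt] := leP A (L * d).
exfalso.
set r := A * d / (A - L * d) + d.
have r0 : 0 <= r.
  rewrite /r; apply: addr_ge0 => //; apply: divr_ge0; [apply: mulr_ge0 => //| lra].
have hN := archi_boundP r0; set N := Num.Def.archi_bound r in hN.
have N0 : (0 < N)%N by rewrite -(ltr0n R); lra.
have dN : d < N%:R.
  have : d <= r by rewrite /r lerDr; apply: divr_ge0; [apply: mulr_ge0 => //| lra].
  lra.
have := H2 N N0 dN.
have hlt : A * d / (A - L * d) < N%:R by rewrite /r in hN; have : 0 <= d by []; lra.
rewrite ltr_pdivrMr in hlt; last by lra.
nra.
Qed.

Lemma hd_bound x y : posorth x -> posorth y -> forall i j,
  ln (y j 0 / x j 0) - ln (y i 0 / x i 0) <= hilbert_d x y.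
Proof.
move=> hx hy i j.
have p : forall k, 0 < y k 0 / x k 0 by move=> k; apply: divr_gt0.
rewrite /hilbert_d; set M := \big[_/_]_(_ < _) _.
have tM : (x i 0 * y j 0) / (x j 0 * y i 0) <= M.
  apply: le_trans (le_bigmax _ _ i); exact: (le_bigmax _ (fun j => (x i 0 * y j 0) / (x j 0 * y i 0)) j).
have te : (x i 0 * y j 0) / (x j 0 * y i 0) = expR (ln (y j 0 / x j 0) - ln (y i 0 / x i 0)).
  rewrite expRD expRN !lnK ?posrE //.
  have := hx i; have := hx j; have := hy i; have := hy j => a b c d.
  field; apply/and3P; split; apply: lt0r_neq0 => //.
rewrite -[leLHS]expRK -te ler_ln // posrE.
  by apply: divr_gt0; apply: mulr_gt0.
by apply: lt_le_trans tM; apply: divr_gt0; apply: mulr_gt0.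
Qed.

Lemma hd_ge0 x y : 0 <= hilbert_d x y.
Proof. by apply: ln_ge0; apply: bigmax_ge_id. Qed.

Lemma lipd q m x y L : posorth q -> posorth x -> posorth y ->
  (forall u, posorth u -> forall e, 0 < e -> exists a,
      inner q (absmx (m - a%:M) *m u) / inner q u <= L + e) ->
  `|rayleigh q m x - rayleigh q m y| <= L * hilbert_d x y.
Proof.
move=> hq hx hy hL.
case: (posnP n) => [n0|n0].
  have -> : x = y.
    by apply/matrixP => i; have : (i < 0)%N by rewrite -[X in (_ < X)%N]n0.
  rewrite subrr normr0 /hilbert_d.
  move: (y) hy; rewrite n0 => y' _; rewrite big_ord0 ln1 mulr0 //.
apply: core => //; [exact: hd_ge0 | exact: hd_bound].
Qed.

End Aux.

Theorem lemma1 (R : realType) (n : nat) (q : 'cV[R]_n) (m : 'M[R]_n) :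
  posorth q -> metzler m -> irreducible_mx m ->
  (exists C : R, forall x y : 'cV[R]_n, posorth x -> posorth y ->
      `|rayleigh q m x - rayleigh q m y| <= C * hilbert_d x y) /\
  (lip_const (rayleigh q m) <= lip_bound q m)%E.
Proof.
move=> hq _ _; split.
  exists (\sum_i \sum_j q i 0 * `|m i j| / q j 0) => x y hx hy.
  apply: lipd => // u hu e e0; exists 0.
  set C := \sum_i \sum_j q i 0 * `|m i j| / q j 0.
  have C0 : 0 <= C.
    apply: sumr_ge0 => i _; apply: sumr_ge0 => j _.
    apply: divr_ge0; [apply: mulr_ge0; [apply: ltW|] | apply: ltW] => //.
  apply: (@le_trans _ _ C); last by rewrite lerDl ltW.
  set S := inner q u.
  have S0 : 0 <= S.
    by apply: sumr_ge0 => i _; apply: mulr_ge0; apply: ltW.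
  have hnum : inner q (absmx (m - 0%:M) *m u) <= C * S.
    rewrite inner_mul /C big_distrl; apply: ler_sum => i _.
    rewrite big_distrl; apply: ler_sum => j _ /=.
    rewrite !mxE mul0rn subr0.
    have hj : q j 0 * u j 0 <= S.
      rewrite /S /inner (bigD1 j) //= lerDl; apply: sumr_ge0 => k _.
      by apply: mulr_ge0; apply: ltW.
    have qj := hq j.
    have -> : q i 0 * `|m i j| * u j 0 = q i 0 * `|m i j| / q j 0 * (q j 0 * u j 0).
      by field; apply: lt0r_neq0.
    apply: ler_wpM2l => //; apply: divr_ge0; [apply: mulr_ge0; [apply: ltW|] | apply: ltW] => //.
  have [->|Sp] := eqVneq S 0; first by rewrite invr0 mulr0.
  have Spos : 0 < S by rewrite lt_neqAle eq_sym Sp.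
  by rewrite ler_pdivrMr.
apply: ge_ereal_sup => r [x [y [hx hy hd ->]]].
case: (posnP n) => [n0|n0].
  have h0 : hilbert_d x y = 0.
    by rewrite /hilbert_d; move: (x) (y); rewrite n0 => x' y'; rewrite big_ord0 ln1.
  by rewrite h0 eqxx in hd.
have K0u : forall u : 'cV[R]_n, posorth u -> K0 u.
  move=> u hu; split; first by move=> i; apply: ltW.
  move/matrixP/(_ (Ordinal n0) 0); rewrite mxE => h.
  by have := hu (Ordinal n0); rewrite h ltxx.
have infle : forall u, posorth u ->
   (ereal_inf [set ((inner q (absmx (m - a%:M) *m u) / inner q u)%:E) | a in [set: R]]
     <= lip_bound q m)%E.
  move=> u hu; apply: ereal_sup_ubound; exists u => //; exact: K0u.
have L0 : (0 <= lip_bound q m)%E.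
  apply: le_trans (infle x hx); apply: le_ereal_inf_tmp => _ [a _ <-].
  rewrite lee_fin; apply: divr_ge0; last exact: ltW (inner_pos n0 hq hx).
  rewrite /inner; apply: sumr_ge0 => i _; apply: mulr_ge0; first exact: ltW.
  rewrite mxE; apply: sumr_ge0 => j _; rewrite mxE; apply: mulr_ge0 => //; exact: ltW.
move: infle L0; case: (lip_bound q m) => [l| |] infle L0 //; last by apply: leey.
have d0 : 0 < hilbert_d x y by rewrite lt_neqAle eq_sym hd hd_ge0.
rewrite lee_fin ler_pdivrMr //.
apply: lipd => // u hu e e0.
have : (ereal_inf [set ((inner q (absmx (m - a%:M) *m u) / inner q u)%:E) | a in [set: R]]
     < (l + e)%:E)%E.
  by apply: le_lt_trans (infle u hu) _; rewrite lte_fin ltrDl.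
move/ereal_inf_lt => [_ [a _ <-]]; rewrite lte_fin => h.
by exists a; apply: ltW.
Qed.
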